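(* Let $p$ be prime, $d>1$ an integer, $N\ge1$, and let $P_d^N$ be the degree-$d$ powering map ($(x_1,\dots,x_N)\mapsto(x_1^d,\dots,x_N^d)$ on $\mathbb{A}^N$, $[x_0:\cdots:x_N]\mapsto[x_0^d:\cdots:x_N^d]$ on $\mathbb{P}^N$). Let $m^-$ be the largest divisor of $p-1$ relatively prime to $d$. For a positive integer $k$ let $\delta_k=1$ if $k=1$ and $\delta_k=0$ otherwise, and for a divisor $e$ of $m^-$ let $o(e)$ denote the multiplicative order of $d$ modulo $e$ (with $o(1)=1$). Then for every positive integer $k$, $$\#\mathrm{Per}_k(P_d^N,\mathbb{A}^N(\mathbb{F}_p))=\delta_k+\sum_{I=1}^N\ \sum_{\substack{(k_1,\dots,k_I),\ k_i\mid m^-\\ \mathrm{lcm}(o(k_1),\dots,o(k_I))=k}}\binom{N}{I}\prod_{i=1}^I\varphi(k_i),$$ $$\#\mathrm{Per}_k(P_d^N,\mathbb{P}^N(\mathbb{F}_p))=\sum_{D=0}^N\Bigg(\delta_k+\sum_{I=1}^D\ \sum_{\substack{(k_1,\dots,k_I),\ k_i\mid m^-\\ \mathrm{lcm}(o(k_1),\dots,o(k_I))=k}}\binom{D}{I}\prod_{i=1}^I\varphi(k_i)\Bigg),$$ where $\varphi$ is Euler's totient function. Furthermore, $$\#\mathrm{Per}(P_d^N,\mathbb{A}^N(\mathbb{F}_p))=1+\sum_{I=1}^N\binom{N}{I}\sum_{\substack{(k_1,\dots,k_I)\\ k_i\mid m^-}}\prod_{i=1}^I\varphi(k_i)=(m^-+1)^N,$$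 $$\#\mathrm{Per}(P_d^N,\mathbb{P}^N(\mathbb{F}_p))=\sum_{D=0}^N\Bigg(1+\sum_{I=1}^D\binom{D}{I}\sum_{\substack{(k_1,\dots,k_I)\\ k_i\mid m^-}}\prod_{i=1}^I\varphi(k_i)\Bigg)=\sum_{D=0}^N(m^-+1)^D.$$
   Context: For a self-map $F$ of a finite set $S$, the minimal period of a periodic point $x$ is the least $n\ge1$ with $F^n(x)=x$; $\mathrm{Per}_k(F,S)$ is the set of points of $S$ of minimal period exactly $k$, and $\mathrm{Per}(F,S)=\bigcup_{k\ge1}\mathrm{Per}_k(F,S)$. Inner sums range over ordered $I$-tuples of positive divisors of $m^-$. *)

(* Defs.v *)
From HB Require Import structures.
From mathcomp Require Import boolp.
From mathcomp Require Import all_boot all_order all_algebra all_field.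
Set Implicit Arguments. Unset Strict Implicit. Unset Printing Implicit Defensive.
Import GRing.Theory.

Definition Per_k (T : finType) (F : T -> T) (S : {set T}) (k : nat) : {set T} :=
  [set x in S | [&& (0 < k)%N, iter k F x == x &
                   [forall j : 'I_k, (0 < j)%N ==> (iter j F x != x)]]].

Definition Per (T : finType) (F : T -> T) (S : {set T}) : {set T} :=
  [set x in S | `[< exists k : nat, (0 < k)%N /\ iter k F x = x >]].

Definition powmap (R : pzRingType) (n d : nat) (x : {ffun 'I_n -> R}) :
  {ffun 'I_n -> R} := [ffun i => (x i ^+ d)%R].

(* Projective N-space over a field K, modelled by normalized representatives:
   vectors of K^(N+1) whose first nonzero coordinate equals 1. *)
Definition normalized (K : fieldType) (n : nat) (x : {ffun 'I_n -> K}) : bool :=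
  [exists i : 'I_n, (x i == 1%R) && [forall j : 'I_n, (j < i)%N ==> (x j == 0%R)]].

Definition projN (K : finFieldType) (N : nat) : {set {ffun 'I_N.+1 -> K}} :=
  [set x | normalized x].

Definition mminus (p d : nat) : nat :=
  \max_(e < p | (e %| p.-1) && coprime e d) e.

(* multiplicative order of d modulo e, with o(1) = 1 (meaningful for coprime d e). *)
Definition ordmod (d e : nat) : nat :=
  if (e <= 1)%N then 1%N
  else find (fun k => (0 < k)%N && (d ^ k %% e == 1)) (iota 0 e.+1).

Definition delta (k : nat) : nat := (k == 1%N).

Definition tupsum_k (d m n k : nat) : nat :=
  \sum_(1 <= I < n.+1)
    \sum_(t : {ffun 'I_I -> 'I_m.+1} |
            [forall i, ((t i : nat) %| m)%N] &&
            (\big[lcmn/1%N]_(i < I) ordmod d (t i) == k))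
      'C(n, I) * \prod_(i < I) totient (t i).

Definition tupsum (m n : nat) : nat :=
  \sum_(1 <= I < n.+1)
    'C(n, I) * \sum_(t : {ffun 'I_I -> 'I_m.+1} | [forall i, ((t i : nat) %| m)%N])
                 \prod_(i < I) totient (t i).

(* Main.v *)
Require Import Defs.
From HB Require Import structures.
From mathcomp Require Import boolp.
From mathcomp Require Import all_boot all_order all_algebra all_field all_fingroup all_solvable.
Import GRing.Theory.

Lemma totient_leq e : totient e <= e.
Proof.
rewrite totient_count_coprime.
have : \sum_(0 <= i < e) coprime e i <= \sum_(0 <= i < e) 1.
  by apply: leq_sum => i _; exact: leq_b1.
by rewrite sum_nat_const_nat muln1 subn0.
Qed.

Lemma modX1 d e k : 0 < d -> 1 < e -> (e %| d ^ k - 1) = (d ^ k %% e == 1).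
Proof.
move=> d0 e1.
rewrite -eqn_mod_dvd ?expn_gt0 ?d0 // [1 %% e]modn_small //.
Qed.

Lemma ordmod_spec d e : 1 < e -> coprime e d ->
  let o := ordmod d e in
  [/\ 0 < o, d ^ o %% e == 1 & forall k, 0 < k < o -> d ^ k %% e != 1].
Proof.
move=> e1 co o.
have hasQ : has (fun k => (0 < k) && (d ^ k %% e == 1)) (iota 0 e.+1).
  apply/hasP; exists (totient e).
    by rewrite mem_iota add0n ltnS totient_leq.
  rewrite totient_gt0 (ltn_trans _ e1) //=.
  have := Euler_exp_totient (a:=d) (n:=e); rewrite coprime_sym => /(_ co) ->.
  by rewrite modn_small.
have Ho : o = find (fun k => (0 < k) && (d ^ k %% e == 1)) (iota 0 e.+1).
  by rewrite /o /ordmod leqNgt e1.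
have olt : o < e.+1 by rewrite Ho -[X in _ < X](size_iota 0 e.+1) -has_find.
have := nth_find 0 hasQ; rewrite -Ho nth_iota // add0n => /andP[o0 ho].
split => // k /andP[k0 ko].
have := before_find 0 (a := fun k => (0 < k) && (d ^ k %% e == 1)) (s := iota 0 e.+1) (i := k).
rewrite -Ho => /(_ ko); rewrite nth_iota ?(ltn_trans ko) // add0n k0 /=.
by move=> ->.
Qed.

Lemma NT d e n : 0 < d -> 0 < e -> 0 < n ->
  (e %| d ^ n - 1) = coprime e d && (ordmod d e %| n).
Proof.
move=> d0 e0 n0; case: (ltngtP e 1) => [|e1|->]; first by rewrite ltnNge e0.
  rewrite modX1 //.
  have [co|nco] := boolP (coprime e d); last first.
    apply/negbTE; apply: contra nco => /eqP h.
    by rewrite -(coprime_pexpr _ _ n0) -coprime_modr h coprimen1.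
  have [o0 ho hmin] := ordmod_spec d e e1 co; set o := ordmod d e in o0 ho hmin *.
  have key : forall k, d ^ k %% e = d ^ (k %% o) %% e.
    move=> k; rewrite {1}(divn_eq k o) expnD (mulnC (k %/ o)) expnM -modnMm.
    rewrite -(modnXm (k %/ o) e (d ^ o)) (eqP ho) exp1n (modn_small e1).
    by rewrite mul1n modn_mod.
  rewrite /= key; apply/idP/idP => [h|].
    rewrite /dvdn; apply: contraT => nz.
    have := hmin (n %% o); rewrite lt0n nz ltn_mod o0 /= => /(_ isT).
    by rewrite h.
  by rewrite /dvdn => /eqP ->; rewrite expn0 modn_small.
by rewrite dvd1n coprime1n /ordmod leqnn dvd1n.
Qed.

Lemma mminus_spec p d : prime p -> 
  [/\ 0 < mminus p d, mminus p d %| p.-1, coprime (mminus p d) d &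
    forall e, e %| p.-1 -> coprime e d -> e %| mminus p d].
Proof.
move=> hp; have p1 : 1 < p := prime_gt1 hp.
have pp : 0 < p.-1 by rewrite -ltnS prednK // ltnW.
have i0P : (Ordinal p1 %| p.-1) && coprime (Ordinal p1) d by rewrite /= dvd1n coprime1n.
rewrite /mminus (bigmax_eq_arg (Ordinal p1) (P := fun e : 'I_p => (e %| p.-1) && coprime e d) i0P).
case: arg_maxnP => // i /andP[idv ico] maxi.
have i0 : 0 < i.
  by rewrite lt0n; apply: contraTneq idv => ->; rewrite dvd0n -lt0n pp.
split => // e edv eco.
set l := lcmn e i.
have ldv : l %| p.-1 by rewrite dvdn_lcm edv idv.
have lco : coprime l d.
  apply: (coprime_dvdl (n := e * i)); first by rewrite dvdn_lcm dvdn_mulr ?dvdn_mull.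
  by rewrite coprimeMl eco ico.
have lp : l < p by rewrite (leq_ltn_trans (dvdn_leq pp ldv)) // prednK // ltnW.
have := maxi (Ordinal lp); rewrite /= ldv lco => /(_ isT) li.
have l0 : 0 < l by rewrite lcmn_gt0 i0 andbT lt0n; apply: contraTneq edv => ->; rewrite dvd0n -lt0n pp.
have il : i <= l := dvdn_leq l0 (dvdn_lcmr e i).
have -> : (i : nat) = l by apply/eqP; rewrite eqn_leq il li.
exact: dvdn_lcml.
Qed.

Lemma card_order_cyclic (gT : finGroupType) e :
  cyclic [set: gT] -> e %| #|gT| -> #|[pred u : gT | #[u]%g == e]| = totient e.
Proof.
move=> cyc he; have cyc' := cyc; case/cyclicP: cyc' => a Ha.
have oa : #[a]%g = #|gT| by rewrite /order -Ha cardsT.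
rewrite -oa in he.
have ed : (#[a]%g %/ e) %| #[a]%g by rewrite -{2}(divnK he) dvdn_mulr.
set b := (a ^+ (#[a]%g %/ e))%g.
have ob : #[b]%g = e.
  by rewrite /b orderXdiv // divnA // mulKn // order_gt0.
rewrite -{2}ob totient_gen; apply: eq_card => x; rewrite !inE /generator.
have := @eq_subG_cyclic gT [set: gT]%G <[b]>%G <[x]>%G cyc (subsetT _) (subsetT _).
by rewrite /= => ->; rewrite -/(order b) -/(order x) ob eq_sym.
Qed.

Definition uof (p : nat) (y : 'F_p) : {unit 'F_p} := insubd (1%g : {unit 'F_p}) y.

Arguments uof {p}.

Definition per (p d : nat) (y : 'F_p) : nat :=
  if y == 0%R then 1%N else
  if coprime #[uof y]%g d then ordmod d #[uof y]%g else 0%N.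

Lemma iter_pow (R : pzRingType) d n (y : R) :
  iter n (fun z => (z ^+ d)%R) y = (y ^+ (d ^ n))%R.
Proof.
elim: n => [|n IH]; first by rewrite expr1.
by rewrite iterS IH -exprM expnSr.
Qed.

Lemma val_uof p (y : 'F_p) : y != 0%R -> val (uof y) = y.
Proof. by move=> y0; rewrite /uof val_insubd unitfE y0. Qed.

Arguments val_uof {p y}.

Lemma per_spec p d (y : 'F_p) n : 0 < d -> 0 < n ->
  (iter n (fun z => (z ^+ d)%R) y == y) = (per p d y %| n).
Proof.
move=> d0 n0; rewrite iter_pow /per.
have [->|y0] := eqVneq y 0%R.
  by rewrite expr0n expn_eq0 eqn0Ngt d0 /= dvd1n eqxx.
set u := uof y.
have yu : val u = y := val_uof y0.
have -> : ((y ^+ (d ^ n))%R == y) = ((u ^+ (d ^ n))%g == u).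
  by rewrite -[RHS]val_eqE FinRing.val_unitX yu.
have dn : 0 < d ^ n by rewrite expn_gt0 d0.
rewrite -(prednK dn) expgSr.
have -> : (((u ^+ (d ^ n).-1) * u)%g == u) = ((u ^+ (d ^ n).-1)%g == 1%g).
  apply/eqP/eqP => [h|->]; last by rewrite mul1g.
  by apply: (mulIg u); rewrite h mul1g.
rewrite -order_dvdn -subn1 NT // ?order_gt0 //.
by case: (coprime _ _) => //=; rewrite dvd0n; move: n0; clear; case: n.
Qed.

Lemma card_units p : prime p -> #|[set: {unit 'F_p}]| = p.-1.
Proof. by move=> hp; rewrite card_finField_unit card_Fp. Qed.

Lemma sum_per p d H : prime p -> 0 < d -> H 0 = 0 ->
  \sum_(a : 'F_p | a != 0%R) H (per p d a) =
  \sum_(e : 'I_(mminus p d).+1 | e %| mminus p d) totient e * H (ordmod d e).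
Proof.
move=> hp d0 H0.
have [m0 mdv mco mmax] := mminus_spec p d hp.
set m := mminus p d in m0 mdv mco mmax *.
rewrite (reindex_onto (fun u : {unit 'F_p} => val u) (@uof p)); last first.
  by move=> a a0; exact: val_uof.
have hu : forall u : {unit 'F_p}, val u != 0%R.
  by move=> u; rewrite -unitfE; exact: (valP u).
rewrite (eq_bigl xpredT); last by move=> u; rewrite hu /uof valKd eqxx.
rewrite (eq_bigr (fun u => if #[u]%g %| m then H (ordmod d #[u]%g) else 0)); last first.
  move=> u _; rewrite /per (negbTE (hu u)) /uof valKd.
  have ou : #[u]%g %| p.-1 by rewrite -(card_units p hp) order_dvdG ?inE.
  have -> : coprime #[u]%g d = (#[u]%g %| m).
    apply/idP/idP => [co|dv]; first exact: mmax.
    exact: coprime_dvdl dv mco.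
  by case: ifP.
rewrite -big_mkcond /=.
rewrite (partition_big (fun u : {unit 'F_p} => (inord #[u]%g : 'I_m.+1)) (fun e : 'I_m.+1 => e %| m)) /=; last first.
  by move=> u dv; rewrite inordK // ltnS; exact: dvdn_leq.
apply: eq_bigr => e edv.
rewrite (eq_bigl (fun u => #[u]%g == e)); last first.
  move=> u; apply/andP/eqP => [[dv /eqP <-]|oe].
    by rewrite inordK // ltnS dvdn_leq.
  split; first by rewrite oe.
  by apply/eqP/val_inj; rewrite /= inordK // oe ltnS dvdn_leq.
rewrite (eq_bigr (fun _ => H (ordmod d e))); last by move=> u /eqP ->.
rewrite sum_nat_const card_order_cyclic //.
  exact: field_unit_group_cyclic [set: _]%G.
by rewrite -cardsT card_units // (dvdn_trans edv mdv).
Qed.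

Set Implicit Arguments. Unset Strict Implicit. Unset Printing Implicit Defensive.

Definition consf (A : Type) n (a : A) (x : {ffun 'I_n -> A}) : {ffun 'I_n.+1 -> A} :=
  [ffun i => if unlift ord0 i is Some j then x j else a].

Lemma consf0 (A : Type) n (a : A) (x : {ffun 'I_n -> A}) : consf a x ord0 = a.
Proof. by rewrite ffunE unlift_none. Qed.

Lemma consfS (A : Type) n (a : A) (x : {ffun 'I_n -> A}) j : consf a x (lift ord0 j) = x j.
Proof. by rewrite ffunE liftK. Qed.

Lemma big_split_ffun (A : finType) n (G : {ffun 'I_n.+1 -> A} -> nat) :
  \sum_x G x = \sum_(a : A) \sum_(x : {ffun 'I_n -> A}) G (consf a x).
Proof.
rewrite pair_bigA /=.
rewrite (reindex (fun q : A * {ffun 'I_n -> A} => consf q.1 q.2)) //.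
exists (fun x : {ffun 'I_n.+1 -> A} => (x ord0, [ffun j => x (lift ord0 j)])).
  move=> [a x] _ /=; rewrite consf0; congr (_, _); apply/ffunP => j.
  by rewrite ffunE consfS.
move=> x _ /=; apply/ffunP => i; rewrite ffunE.
by case: (unliftP ord0 i) => [j ->|->]; rewrite ?ffunE.
Qed.

Lemma big_ffun0 (A : finType) (a0 : A) (G : {ffun 'I_0 -> A} -> nat) :
  \sum_x G x = G [ffun _ => a0].
Proof.
rewrite (big_pred1 [ffun _ => a0]) // => x /=.
by symmetry; apply/eqP/ffunP => -[].
Qed.

Lemma forall_consf (A : Type) n (a : A) (x : {ffun 'I_n -> A}) (P : A -> bool) :
  [forall i, P (consf a x i)] = P a && [forall i, P (x i)].
Proof.
apply/forallP/andP => [h|[pa /forallP h] i].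
  split; first by have := h ord0; rewrite consf0.
  by apply/forallP => j; have := h (lift ord0 j); rewrite consfS.
by case: (unliftP ord0 i) => [j ->|->]; rewrite ?consf0 ?consfS.
Qed.

Lemma bigop_consf (A : Type) n (a : A) (x : {ffun 'I_n -> A}) (op : Monoid.law 1%N) (f : A -> nat) :
  \big[op/1%N]_(i < n.+1) f (consf a x i) = op (f a) (\big[op/1%N]_(i < n) f (x i)).
Proof.
by rewrite big_ord_recl consf0; congr (op _ _); apply: eq_bigr => j _; rewrite consfS.
Qed.

Definition Lc p d n (x : {ffun 'I_n -> 'F_p}) := \big[lcmn/1%N]_(i < n) per p d (x i).
Definition Tsum p d n (F : nat -> nat) := \sum_(x : {ffun 'I_n -> 'F_p}) F (Lc d x).
Definition Ssum p d n (F : nat -> nat) :=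
  \sum_(x : {ffun 'I_n -> 'F_p} | [forall i, x i != 0%R]) F (Lc d x).
Definition Rsum d m n (F : nat -> nat) :=
  \sum_(t : {ffun 'I_n -> 'I_m.+1} | [forall i, (t i : nat) %| m])
     F (\big[lcmn/1%N]_(i < n) ordmod d (t i)) * \prod_(i < n) totient (t i).
Definition Usum p d n (F : nat -> nat) :=
  \sum_(x : {ffun 'I_n -> 'F_p} | normalized x) F (Lc d x).

Lemma per0 p d : per p d 0%R = 1%N.
Proof. by rewrite /per eqxx. Qed.

Lemma per1 p d : per p d 1%R = 1%N.
Proof.
have u1 : uof (1%R : 'F_p) = 1%g.
  by apply: val_inj; rewrite FinRing.val_unit1 val_uof // oner_neq0.
by rewrite /per oner_eq0 u1 order1 coprime1n /ordmod leqnn.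
Qed.

Lemma Lc_consf p d n a (x : {ffun 'I_n -> 'F_p}) :
  Lc d (consf a x) = lcmn (per p d a) (Lc d x).
Proof. exact: (bigop_consf a x lcmn (per p d)). Qed.

Lemma T_rec p d n F : Tsum p d n.+1 F =
  Tsum p d n F + \sum_(a : 'F_p | a != 0%R) Tsum p d n (fun q => F (lcmn (per p d a) q)).
Proof.
rewrite /Tsum big_split_ffun (bigD1 0%R) //=; congr (_ + _).
  by apply: eq_bigr => x _; rewrite Lc_consf per0 lcm1n.
by apply: eq_bigr => a _; apply: eq_bigr => x _; rewrite Lc_consf.
Qed.

Lemma S_rec p d n F : Ssum p d n.+1 F =
  \sum_(a : 'F_p | a != 0%R) Ssum p d n (fun q => F (lcmn (per p d a) q)).
Proof.
rewrite /Ssum big_mkcond big_split_ffun /= [RHS]big_mkcond /=.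
apply: eq_bigr => a _.
under eq_bigr => x _ do rewrite (forall_consf a x (fun y => y != 0%R)).
case: (a != 0%R) => /=; last by rewrite big1.
by rewrite [RHS]big_mkcond; apply: eq_bigr => x _; rewrite Lc_consf.
Qed.

Lemma R_rec d m n F : Rsum d m n.+1 F =
  \sum_(e : 'I_m.+1 | (e : nat) %| m)
     totient e * Rsum d m n (fun q => F (lcmn (ordmod d e) q)).
Proof.
rewrite /Rsum big_mkcond big_split_ffun /= [RHS]big_mkcond /=.
apply: eq_bigr => e _.
under eq_bigr => x _ do rewrite (forall_consf e x (fun y : 'I_m.+1 => (y : nat) %| m)).
case: ((e : nat) %| m) => /=; last by rewrite big1.
rewrite big_distrr /= [RHS]big_mkcond; apply: eq_bigr => x _.
case: [forall i, _] => //=.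
rewrite (bigop_consf e x lcmn (fun y : 'I_m.+1 => ordmod d y)).
rewrite (bigop_consf e x muln (fun y : 'I_m.+1 => totient y)).
by rewrite mulnCA.
Qed.

Lemma normalized_consf p n a (x : {ffun 'I_n -> 'F_p}) :
  normalized (consf a x) = (a == 1%R) || ((a == 0%R) && normalized x).
Proof.
apply/existsP/idP => [[i /andP[xi1 /forallP h]]|].
  case: (unliftP ord0 i) xi1 h => [j ->|->] xi1 h; last by rewrite -(consf0 a x) xi1.
  have a0 : a == 0%R.
    by have := h ord0; rewrite lift0 /= consf0.
  apply/orP; right; rewrite a0 /=; apply/existsP; exists j.
  rewrite -(consfS a x) xi1 /=; apply/forallP => k; apply/implyP => kj.
  by have := h (lift ord0 k); rewrite !lift0 ltnS kj consfS.
case/orP => [a1|/andP[a0 /existsP[j /andP[xj1 /forallP h]]]].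
  by exists ord0; rewrite consf0 a1 /=; apply/forallP => k.
exists (lift ord0 j); rewrite consfS xj1 /=; apply/forallP => k; apply/implyP.
case: (unliftP ord0 k) => [k' ->|->]; last by rewrite consf0.
by rewrite !lift0 ltnS consfS => kj; have := h k'; rewrite kj.
Qed.

Lemma U_rec p d n F : Usum p d n.+1 F = Tsum p d n F + Usum p d n F.
Proof.
rewrite /Usum /Tsum big_mkcond big_split_ffun /= (bigD1 1%R) //= (bigD1 0%R) /=; last first.
  by [].
rewrite [X in _ + (_ + X)]big1 ?addn0; last first.
  move=> a /andP[a1 a0]; apply: big1 => x _.
  by rewrite normalized_consf (negbTE a1) (negbTE a0).
congr (_ + _).
  by apply: eq_bigr => x _; rewrite normalized_consf eqxx Lc_consf per1 lcm1n.
rewrite [RHS]big_mkcond; apply: eq_bigr => x _.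
by rewrite normalized_consf eqxx eq_sym oner_eq0 /= Lc_consf per0 lcm1n.
Qed.

Lemma Ssum0 p d F : Ssum p d 0 F = F 1%N.
Proof.
rewrite /Ssum big_mkcond (big_ffun0 0%R) /=.
have -> : [forall i : 'I_0, [ffun=> 0%R] i != 0%R :> 'F_p] by apply/forallP => -[].
by rewrite /Lc big_ord0.
Qed.

Lemma Rsum0 d m F : Rsum d m 0 F = F 1%N.
Proof.
rewrite /Rsum big_mkcond (big_ffun0 ord0) /=.
have -> : [forall i : 'I_0, ([ffun=> ord0] i : 'I_m.+1) %| m] by apply/forallP => -[].
by rewrite !big_ord0 muln1.
Qed.

Lemma Tsum0 p d F : Tsum p d 0 F = F 1%N.
Proof. by rewrite /Tsum (big_ffun0 0%R) /Lc big_ord0. Qed.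

Lemma Usum0 p d F : Usum p d 0 F = 0.
Proof.
rewrite /Usum big_mkcond (big_ffun0 0%R) /=.
have -> : normalized ([ffun=> 0%R] : {ffun 'I_0 -> 'F_p}) = false.
  by apply/existsP => -[[]].
by [].
Qed.

Lemma SR p d n F : prime p -> 0 < d -> F 0 = 0 ->
  Ssum p d n F = Rsum d (mminus p d) n F.
Proof.
move=> hp d0; elim: n F => [|n IH] F F0; first by rewrite Ssum0 Rsum0.
rewrite S_rec R_rec.
transitivity (\sum_(a : 'F_p | a != 0%R) Rsum d (mminus p d) n (fun q => F (lcmn (per p d a) q))).
  by apply: eq_bigr => a _; apply: IH; rewrite lcmn0.
have H0 : Rsum d (mminus p d) n (fun r => F (lcmn 0 r)) = 0.
  by rewrite /Rsum big1 // => t _; rewrite lcm0n F0.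
by have := sum_per p d (fun q => Rsum d (mminus p d) n (fun r => F (lcmn q r))) hp d0 H0.
Qed.

Lemma TS p d n F : Tsum p d n F = \sum_(0 <= I < n.+1) 'C(n, I) * Ssum p d I F.
Proof.
elim: n F => [|n IH] F; first by rewrite Tsum0 big_nat1 Ssum0 bin0 mul1n.
rewrite T_rec IH.
under [X in _ + X = _]eq_bigr => a _ do rewrite IH.
rewrite exchange_big /=.
have E : forall I, \sum_(a : 'F_p | a != 0%R) 'C(n, I) * Ssum p d I (fun q => F (lcmn (per p d a) q))
   = 'C(n, I) * Ssum p d I.+1 F.
  by move=> I; rewrite S_rec big_distrr.
under [X in _ + X = _]eq_bigr => I _ do rewrite E.
rewrite [RHS]big_nat_recl // bin0 mul1n.
rewrite [X in _ = _ + X](eq_bigr (fun I => 'C(n, I.+1) * Ssum p d I.+1 F + 'C(n, I) * Ssum p d I.+1 F)); last first.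
  by move=> I _; rewrite binS mulnDl.
rewrite big_split /= big_nat_recl // bin0 mul1n -addnA; congr (_ + (_ + _)).
by rewrite big_nat_recr //= bin_small // mul0n addn0.
Qed.

Lemma US p d n F : Usum p d n.+1 F = \sum_(0 <= D < n.+1) Tsum p d D F.
Proof.
elim: n => [|n IH]; first by rewrite U_rec Usum0 addn0 big_nat1.
by rewrite U_rec IH [RHS]big_nat_recr //= addnC.
Qed.

Lemma card_setP (T : finType) (S : {set T}) (P : pred T) :
  #|[set x in S | P x]| = \sum_(x in S) P x.
Proof.
rewrite -sum1_card big_mkcond [RHS]big_mkcond /=; apply: eq_bigr => x _.
by rewrite !inE; case: (x \in S); case: (P x).
Qed.

Lemma iter_powmap (R : pzRingType) n d k (x : {ffun 'I_n -> R}) :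
  iter k (powmap d) x = [ffun i => iter k (fun z => (z ^+ d)%R) (x i)].
Proof.
elim: k => [|k IH]; first by apply/ffunP => i; rewrite ffunE.
by rewrite iterS IH; apply/ffunP => i; rewrite /powmap !ffunE.
Qed.

Lemma iter_eq_Lc p d n (x : {ffun 'I_n -> 'F_p}) k : 0 < d -> 0 < k ->
  (iter k (powmap d) x == x) = (Lc d x %| k).
Proof.
move=> d0 k0; rewrite iter_powmap; apply/eqP/dvdn_biglcmP => [h i _|h].
  move/ffunP/(_ i): h; rewrite ffunE => /eqP.
  by rewrite per_spec.
by apply/ffunP => i; rewrite ffunE; apply/eqP; rewrite per_spec //; exact: h.
Qed.

Lemma Per_k_eq p d n (S : {set {ffun 'I_n -> 'F_p}}) k : 0 < d -> 0 < k ->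
  Per_k (powmap d) S k = [set x in S | Lc d x == k].
Proof.
move=> d0 k0; apply/setP => x; rewrite !inE; case: (x \in S) => //=.
rewrite k0 iter_eq_Lc //=.
apply/andP/eqP => [[dv /forallP h]|E]; last first.
  rewrite E; split; first exact: dvdnn.
  apply/forallP => j; apply/implyP => j0.
  by rewrite iter_eq_Lc // E gtnNdvd.
have l0 : 0 < Lc d x.
  by rewrite lt0n; apply: contraTneq dv => ->; rewrite dvd0n -lt0n.
have lk := dvdn_leq k0 dv.
case: ltngtP lk => // lk _.
have := h (Ordinal lk); rewrite /= l0 /= iter_eq_Lc // dvdnn.
by [].
Qed.

Lemma Per_eq p d n (S : {set {ffun 'I_n -> 'F_p}}) : 0 < d ->
  Per (powmap d) S = [set x in S | 0 < Lc d x].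
Proof.
move=> d0; apply/setP => x; rewrite !inE; case: (x \in S) => //=.
apply/asboolP/idP => [[k [k0 /eqP hk]]|l0].
  rewrite iter_eq_Lc // in hk.
  by rewrite lt0n; apply: contraTneq hk => ->; rewrite dvd0n -lt0n.
by exists (Lc d x); split => //; apply/eqP; rewrite iter_eq_Lc.
Qed.

Lemma ordmod_gt0 d e : 0 < ordmod d e.
Proof. by rewrite /ordmod; case: ifP. Qed.

Lemma lcm_ordmod_gt0 d n (f : 'I_n -> nat) : 0 < \big[lcmn/1%N]_(i < n) ordmod d (f i).
Proof.
apply: (big_ind (fun q => 0 < q)) => //; last by move=> i _; exact: ordmod_gt0.
by move=> a b a0 b0; rewrite lcmn_gt0 a0 b0.
Qed.

Lemma affine_k p d D k : prime p -> 0 < d -> 0 < k ->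
  Tsum p d D (fun q => q == k) = delta k + tupsum_k d (mminus p d) D k.
Proof.
move=> hp d0 k0; rewrite TS big_nat_recl // bin0 mul1n Ssum0 /delta eq_sym; congr (_ + _).
rewrite /tupsum_k big_add1 /=; apply: eq_bigr => I _.
rewrite SR //; last by case: k k0.
rewrite /Rsum big_distrr [RHS]big_mkcondr /=; apply: eq_bigr => t _.
by case: (_ == k); rewrite ?mul1n ?mul0n ?muln0.
Qed.

Lemma sum_tot_pow m I :
  \sum_(t : {ffun 'I_I -> 'I_m.+1} | [forall i, (t i : nat) %| m]) \prod_(i < I) totient (t i) = m ^ I.
Proof.
have : \prod_(i < I) \sum_(e : 'I_m.+1 | (e : nat) %| m) totient e = m ^ I.
  by rewrite (eq_bigr (fun _ => m)) ?prod_nat_const ?card_ord // => i _; exact: sum_totient_dvd.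
rewrite bigA_distr_big => <-; apply: eq_bigl => t.
by apply/forallP/ffun_onP => h i; have := h i.
Qed.

Lemma affine_per p d D : prime p -> 0 < d ->
  Tsum p d D (fun q => 0 < q) = 1 + tupsum (mminus p d) D.
Proof.
move=> hp d0; rewrite TS big_nat_recl // bin0 mul1n Ssum0 /=; congr (_ + _).
rewrite /tupsum big_add1 /=; apply: eq_bigr => I _; rewrite SR //; congr (_ * _).
by apply: eq_bigr => t _; rewrite lcm_ordmod_gt0 mul1n.
Qed.

Lemma tupsum_pow m N : 1 + tupsum m N = m.+1 ^ N.
Proof.
rewrite /tupsum; under eq_bigr => I _ do rewrite sum_tot_pow.
rewrite -(add1n m) expnDn -(big_mkord xpredT (fun i => 'C(N, i) * (1 ^ (N - i) * m ^ i))) [RHS]big_nat_recl // bin0 exp1n expn0 !mul1n.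
congr (_ + _); rewrite big_add1 /=; apply: eq_bigr => i _.
by rewrite exp1n mul1n.
Qed.

Theorem mainTheorem3 (p d N : nat) (hp : prime p) (hd : (1 < d)%N) (hN : (1 <= N)%N) :
  let m := mminus p d in
  (forall k : nat, (0 < k)%N ->
     #|Per_k (@powmap 'F_p N d) [set: {ffun 'I_N -> 'F_p}] k|
       = (delta k + tupsum_k d m N k)%N
  /\ #|Per_k (@powmap 'F_p N.+1 d) (projN 'F_p N) k|
       = (\sum_(0 <= D < N.+1) (delta k + tupsum_k d m D k))%N)
  /\ #|Per (@powmap 'F_p N d) [set: {ffun 'I_N -> 'F_p}]| = (1 + tupsum m N)%N
  /\ (1 + tupsum m N)%N = (m.+1 ^ N)%N
  /\ #|Per (@powmap 'F_p N.+1 d) (projN 'F_p N)|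
       = (\sum_(0 <= D < N.+1) (1 + tupsum m D))%N
  /\ (\sum_(0 <= D < N.+1) (1 + tupsum m D))%N = (\sum_(0 <= D < N.+1) m.+1 ^ D)%N.
Proof.
move=> m.
have d0 : 0 < d by apply: ltnW.
have projE : forall F, \sum_(x in projN 'F_p N) F (Lc d x) = Usum p d N.+1 F.
  by move=> F; apply: eq_bigl => x; rewrite inE.
have affE : forall F, \sum_(x in [set: {ffun 'I_N -> 'F_p}]) F (Lc d x) = Tsum p d N F.
  by move=> F; apply: eq_bigl => x; rewrite inE.
split; [move=> k k0; split|split; [|split; [|split]]].
- by rewrite Per_k_eq // card_setP (affE (fun q => q == k)) affine_k.
- rewrite Per_k_eq // card_setP (projE (fun q => q == k)) US.
  by apply: eq_bigr => D _; rewrite affine_k.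
- by rewrite Per_eq // card_setP (affE (fun q => 0 < q)) affine_per.
- exact: tupsum_pow.
- rewrite Per_eq // card_setP (projE (fun q => 0 < q)) US.
  by apply: eq_bigr => D _; rewrite affine_per.
- by apply: eq_bigr => D _; rewrite tupsum_pow.
Qed.
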